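(* Let $a, b \in \mathbb Z_g$ and let $1 \leq i < j \leq k$. If $\vec \theta \in \Lambda$, then \[ \theta_{\{i, j\}, a} + \theta_{\{i, j\}, b} \equiv \theta_{\{i, j\}, a + b} \pmod{2 \pi}, \] where the undefined value $\theta_{\{i,j\},0}$ is understood to be $0$.
   Context: Let $g\ge 2$, $k\ge 2$ be integers, $\mathbb Z_g$ the integers mod $g$, and $d=\binom{k}{2}(g-1)$. Index the coordinates of $\mathbb R^d$ by pairs $(\{i,j\},a)$ with $1\le i<j\le k$ and $a\in\mathbb Z_g\setminus\{0\}$. Define $Z:(\mathbb Z_g)^k\to\mathbb R^d$ by $[Z(\vec x)]_{\{i,j\},a}=1-1/g$ if $x_i-x_j=a$ and $-1/g$ otherwise. Define $\Phi:\mathbb R^d\to\mathbb C$ by $\Phi(\vec\theta)=\sum_{\vec x\in(\mathbb Z_g)^k} g^{-k}e^{i\vec\theta\cdot Z(\vec x)}$, and $\Lambda=\{\vec\theta\in\mathbb R^d: |\Phi(\vec\theta)|=1\}$. *)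

(* Defs.v *)
From mathcomp Require Import all_boot all_algebra.
From mathcomp Require Import reals trigo.
From mathcomp Require Export complex.
Set Implicit Arguments. Unset Strict Implicit. Unset Printing Implicit Defensive.
Import GRing.Theory Num.Theory ComplexField.
Local Open Scope ring_scope. Local Open Scope complex_scope.

(* Coordinate index set of R^d, d = binom(k,2)(g-1): pairs ({i,j}, a) with
   i < j in 'I_k (0-based, i.e. 1 <= i+1 < j+1 <= k) and a in Z_g \ {0}. *)
Definition coordZ (g k : nat) : predArgType :=
  {p : 'I_k * 'I_k * 'Z_g | (p.1.1 < p.1.2)%N && (p.2 != 0)}.

Definition Zvec (R : realType) (g k : nat) (x : 'I_k -> 'Z_g) (c : coordZ g k) : R :=
  let: (i, j, a) := val c in
  (if x i - x j == a then 1 else 0) - (g%:R)^-1.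

Definition cexp (R : realType) (t : R) : R[i] := (cos t +i* sin t)%C.

Definition Phi (R : realType) (g k : nat) (theta : coordZ g k -> R) : R[i] :=
  \sum_(x : {ffun 'I_k -> 'Z_g})
     ((g ^ k)%:R)^-1%:C * cexp (\sum_(c : coordZ g k) theta c * @Zvec R g k x c).

Definition Lambda (R : realType) (g k : nat) : pred (coordZ g k -> R) :=
  fun theta => `|Phi theta| == 1.

(* theta_{{i,j},a} with the convention theta_{{i,j},0} = 0 (needs i < j). *)
Definition theta_at (R : realType) (g k : nat) (theta : coordZ g k -> R)
    (i j : 'I_k) (a : 'Z_g) : R :=
  match boolP ((i < j)%N && (a != 0)) with
  | AltTrue h => theta (exist _ (i, j, a) h)
  | AltFalse _ => 0
  end.

Definition cong2pi (R : realType) (x y : R) : Prop :=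
  exists n : int, x - y = n%:~R * (2 * pi).

(* Main.v *)
Require Import Defs.
From mathcomp Require Import all_boot all_algebra.
From mathcomp Require Import reals trigo complex.
From mathcomp Require Import order lra.
Import Order.TTheory GRing.Theory Num.Theory ComplexField.
Local Open Scope ring_scope.

Lemma norm_cexp (R : realType) (t : R) : `|cexp t| = 1.
Proof. by rewrite normc_def /= cos2Dsin2 sqrtr1. Qed.

Lemma cos_eq0_pos (R : realType) (y : R) : 0 <= y <= pi -> cos y = 1 -> y = 0.
Proof.
move=> /andP[y0 ypi] cy.
have := @ltr_cos R 0 y.
rewrite !in_itv /=.
move=> /(_ (introT andP (conj (lexx 0) (@pi_ge0 R))) (introT andP (conj y0 ypi))).
rewrite cy cos0 ltxx => /esym H.
apply/eqP; rewrite eq_le y0 andbT leNgt; exact/negbT.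
Qed.

Lemma cos_int (R : realType) (t : R) (n : int) : cos (t - n%:~R * (2 * pi)) = cos t.
Proof.
have P m (u : R) : cos (u + (m%:R * (2 * pi))) = cos u.
  have -> : m%:R * (2 * pi) = (pi *+ 2) *+ m :> R by rewrite -[RHS]mulr_natl -[pi *+ 2]mulr_natl mulrA -natrM mulnC.
  by rewrite periodicn //; exact: cosD2pi.
case: n => m.
- by rewrite -[in RHS](subrK ((Posz m)%:~R * (2 * pi)) t) P.
- by rewrite NegzE mulNr opprK P.
Qed.

Lemma cos_eq1 (R : realType) (t : R) : cos t = 1 -> exists n : int, t = n%:~R * (2 * pi).
Proof.
move=> ct.
have p2 : 0 < 2 * pi :> R by rewrite mulr_gt0 ?pi_gt0.
set n := Num.floor (t / (2 * pi)).
have /andP[h1 h2] := floor_itv (t / (2 * pi)).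
set y := t - n%:~R * (2 * pi).
have ht1 : n%:~R * (2 * pi) <= t by rewrite -ler_pdivlMr.
have ht2 : t < n%:~R * (2 * pi) + 2 * pi.
  by move: h2; rewrite ltr_pdivrMr // intrD mulrDl mul1r.
have y0 : 0 <= y by rewrite /y; lra.
have y2 : y < 2 * pi by rewrite /y; lra.
have cy : cos y = 1.
  by rewrite -ct /y cos_int.
exists n.
suff : y = 0 by rewrite /y => /eqP; rewrite subr_eq0 => /eqP.
have [ypi|piy] := lerP y pi; first exact: cos_eq0_pos (introT andP (conj y0 ypi)) cy.
have cz : cos (2 * pi - y) = 1.
  by rewrite -[in RHS]cy -(@cos_int R y 1) -cosN opprB mul1r.
have : 2 * pi - y = 0.
  apply: (@cos_eq0_pos R (2 * pi - y) _ cz); apply/andP; split; lra.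
move=> ?; lra.
Qed.
Lemma cexp_eq (R : realType) (a b : R) : cexp a = cexp b -> cong2pi a b.
Proof.
rewrite /cexp => -[ca sa].
apply: cos_eq1; rewrite cosB ca sa -!expr2; exact: cos2Dsin2.
Qed.

Lemma step1 (R : realType) (g k : nat) (hg : (2 <= g)%N) (theta : coordZ g k -> R) :
  theta \in @Lambda R g k -> forall x y : {ffun 'I_k -> 'Z_g},
  cong2pi (\sum_(c : coordZ g k) theta c * @Zvec R g k x c)
          (\sum_(c : coordZ g k) theta c * @Zvec R g k y c).
Proof.
rewrite unfold_in /Lambda /Phi => /eqP H x y.
set F := fun x : {ffun 'I_k -> 'Z_g} => cexp (\sum_(c : coordZ g k) theta c * @Zvec R g k x c).
have hN : (0 < (g ^ k)%:R :> R[i]).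
  by rewrite ltr0n expn_gt0 (leq_trans _ hg).
have S1 : \sum_(x : {ffun 'I_k -> 'Z_g}) `|F x| = (g ^ k)%:R.
  rewrite (eq_bigr (fun _ => 1)); last by move=> z _; rewrite norm_cexp.
  by rewrite sumr_const card_ffun !card_ord (Zp_cast hg).
have S2 : `|\sum_(x : {ffun 'I_k -> 'Z_g}) F x| = (g ^ k)%:R.
  have hNR : ((g ^ k)%:R : R) != 0 by rewrite pnatr_eq0 expn_eq0 negb_and -lt0n (leq_trans _ hg).
  move: H; rewrite -mulr_sumr normrM rmorphV ?unitfE // rmorph_nat.
  rewrite normfV (ger0_norm (ltW hN)) => /(congr1 (fun z => z * (g ^ k)%:R)).
  by rewrite mulrAC mulVf ?lt0r_neq0 // mul1r mul1r.
have [t _ Ht] := normC_sum_eq1 (etrans S2 (esym S1)) (fun z _ => norm_cexp _ _).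
apply: cexp_eq; exact: (etrans (Ht x isT) (esym (Ht y isT))).
Qed.
Lemma percoord (R : realType) (g k : nat) (a b : 'Z_g) (i j : 'I_k) (hij : (i < j)%N)
  (c : coordZ g k) :
  let x1 := [ffun m => if m == i then a else if m == j then - b else 0] in
  let x2 := [ffun m => if m == i then a else 0] in
  let x3 := [ffun m => if m == j then - b else 0] in
  let x4 := [ffun m : 'I_k => 0 : 'Z_g] in
  @Zvec R g k x1 c - @Zvec R g k x2 c - (@Zvec R g k x3 c - @Zvec R g k x4 c) =
  (val c == (i, j, a + b))%:R - (val c == (i, j, a))%:R - (val c == (i, j, b))%:R.
Proof.
move=> x1 x2 x3 x4.
case: c => [[[p q] cc] hc]; have /andP[hpq hcc] := hc; rewrite /= in hpq hcc.
rewrite /Zvec /= /x1 /x2 /x3 /x4 !ffunE !xpair_eqE.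
have ij : (i == j) = false by apply/negbTE; rewrite neq_ltn hij.
have ji : (j == i) = false by rewrite eq_sym.
have c0 : (0 == cc) = false by rewrite eq_sym; exact: negbTE.
case: (eqVneq p i) => [epi|npi]; case: (eqVneq q j) => [eqj|nqj].
- subst p q; rewrite ij ji !subrr !subr0 !sub0r !opprK c0 /=.
  rewrite ![cc == _]eq_sym.
  case: (_ == _); case: (_ == _); case: (_ == _); rewrite /=; lra.
- subst p; rewrite ?eqxx ?ij /=.
  have qi : (q == i) = false by apply/negbTE; rewrite neq_ltn hpq orbT.
  rewrite qi; case: (eqVneq q j) nqj => // _ _.
  by rewrite !subr0 !subrr ?c0.
- rewrite eqj in hpq *.
  have pj : (p == j) = false by apply/negbTE; rewrite neq_ltn hpq.
  rewrite pj ji /= ?sub0r ?opprK ?oppr0 ?subrr ?c0; lra.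
- case: (eqVneq p j) => [epj|pj]; case: (eqVneq q i) => [eqi|qi].
  + by move: hpq hij; rewrite epj eqi => /ltn_trans H /H; rewrite ltnn.
  + rewrite /= ?subr0 ?sub0r ?subrr ?oppr0 ?c0; lra.
  + rewrite /= ?subr0 ?sub0r ?subrr ?oppr0 ?c0; lra.
  + rewrite /= ?subr0 ?sub0r ?subrr ?oppr0 ?c0; lra.
Qed.

Lemma sum_ind (R : realType) (g k : nat) (theta : coordZ g k -> R) (i j : 'I_k)
  (hij : (i < j)%N) (a : 'Z_g) :
  \sum_(c : coordZ g k) theta c * (val c == (i, j, a))%:R = theta_at theta i j a.
Proof.
rewrite /theta_at; destruct (boolP ((i < j)%N && (a != 0))) as [h|h].
- rewrite (bigD1 (exist _ (i, j, a) h)) //= eqxx mulr1 big1 ?addr0 //.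
  move=> c hc; case: (eqVneq (val c) (i, j, a)) => [e|ne]; last by rewrite mulr0.
  by move: hc; rewrite (_ : c = exist _ (i, j, a) h) ?eqxx //; apply: val_inj.
- rewrite big1 // => c _; case: (eqVneq (val c) (i, j, a)) => [e|ne]; last by rewrite mulr0.
  have := valP c; rewrite e /= => vc; by rewrite vc in h.
Qed.

Theorem corollary2p3 (R : realType) (g k : nat) (hg : (2 <= g)%N) (hk : (2 <= k)%N)
    (a b : 'Z_g) (i j : 'I_k) (hij : (i < j)%N) (theta : coordZ g k -> R) :
  theta \in @Lambda R g k ->
  cong2pi (theta_at theta i j a + theta_at theta i j b) (theta_at theta i j (a + b)).
Proof.
move=> H.
set x1 := [ffun m => if m == i then a else if m == j then - b else 0].
set x2 := [ffun m => if m == i then a else 0].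
set x3 := [ffun m => if m == j then - b else 0].
set x4 := [ffun m : 'I_k => 0 : 'Z_g].
have [n1 e1] := @step1 R g k hg theta H x1 x2.
have [n2 e2] := @step1 R g k hg theta H x3 x4.
have key : theta_at theta i j (a + b) - theta_at theta i j a - theta_at theta i j b
  = (n1 - n2)%:~R * (2 * pi).
  rewrite intrD intrN mulrDl mulNr -e1 -e2 -!sum_ind // -!sumrB.
  apply: eq_bigr => c _; rewrite -!mulrBr -(@percoord R g k a b i j hij c) -/x1 -/x2 -/x3 -/x4.
  by rewrite !mulrBr.
exists (n2 - n1); rewrite intrD intrN mulrDl mulNr.
have : (n1%:~R - n2%:~R) * (2 * pi) = theta_at theta i j (a + b) - theta_at theta i j a - theta_at theta i j b :> R.
  by rewrite key intrD intrN.
move=> e; lra.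
Qed.
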